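(* Let $(\Omega,\mathscr{F},\mu)$ be a complete probability space, $K\subset L^{0}(\mu)$ absolutely convex, closed in probability and bounded in probability, and $E_K=\mathrm{span}(K)$. Let $\tau$ be an equicontinuous Köthe topology on $E_K$ with the Krein-Šmulian property, induced by $F\subset E'_K$. Then for every $g\in F$ the linear map $E_K\ni f\mapsto\int_\Omega fg\,d\mu$ is $\tau$-continuous.
   Context: $L^{0}(\mu)$ carries the topology of convergence in probability. The polar of $C\subset L^{0}(\mu)$ is $C^{\circ}=\{g\in L^{0}(\mu):\sup_{f\in C}\int_\Omega|fg|\,d\mu\leq1\}$; set $E'_K=\mathrm{span}(K^{\circ})$, paired with $E_K$ via $\langle f,g\rangle=\int_\Omega fg\,d\mu$; for $F\subset E'_K$, $\sigma(E_K,F)$ is the associated weak topology on $E_K$. A set is $K$-bounded if it is contained in $\lambda K$ for some $\lambda>0$. A topology $\tau$ on $E_K$ is an equicontinuous Köthe topology if $K$ is $\tau$-compact and $\tau$ restricted to $K$-bounded sets equals $\sigma(E_K,F)$ for some $F\subset E'_K$ that is solid, separates the points of $E_K$, and contains a strictly positive element; $F$ is then said to induce $\tau$. Such $\tau$ has the Krein-Šmulian property if a convex set $C\subset E_K$ is $\tau$-closed if and only if $C\cap\lambda K$ is $\tau$-closed for each $\lambda>0$. *)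

(* Defs.v *)
From Stdlib Require List.
From HB Require Import structures.
From mathcomp Require Import all_boot all_order all_algebra.
From mathcomp Require Import all_classical all_reals all_analysis.
Set Implicit Arguments. Unset Strict Implicit. Unset Printing Implicit Defensive.
Import Order.TTheory GRing.Theory Num.Theory.
Import numFieldNormedType.Exports.
Local Open Scope classical_set_scope.
Local Open Scope ring_scope.

(* Elements of L^0(mu) are represented by measurable functions T -> R; all
   notions below are invariant under a.e. equality. *)

Section Koethe.
Context {d : measure_display} {T : measurableType d} {R : realType}.
Variable mu : probability T R.

Definition L0 : set (T -> R) := [set f | measurable_fun setT f].

Definition ae_eqf (f h : T -> R) : Prop := {ae mu, forall x, f x = h x}.

Definition pairing (f g : T -> R) : R := Rintegral mu setT (fun x => f x * g x).

Definition cvg_in_prob (u : nat -> T -> R) (f : T -> R) : Prop :=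
  forall eps : R, 0 < eps ->
    (fun n => mu [set x | (eps <= `|u n x - f x|)%R]) @ \oo --> 0%E.

Definition closed_in_prob (K : set (T -> R)) : Prop :=
  forall (u : nat -> T -> R) (f : T -> R),
    (forall n, K (u n)) -> L0 f -> cvg_in_prob u f -> K f.

Definition bounded_in_prob (K : set (T -> R)) : Prop :=
  forall eps : R, 0 < eps -> exists c : R, 0 < c /\
    forall f, K f -> (mu [set x | (c < `|f x|)%R] <= eps%:E)%E.

Definition absolutely_convex (K : set (T -> R)) : Prop :=
  forall f h a b, K f -> K h -> `|a| + `|b| <= 1 ->
    K (fun x => a * f x + b * h x).

Definition convex_set (C : set (T -> R)) : Prop :=
  forall f h (t : R), C f -> C h -> 0 <= t <= 1 ->
    C (fun x => t * f x + (1 - t) * h x).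

Definition lspan (K : set (T -> R)) : set (T -> R) :=
  [set f | exists (s : seq ((T -> R) * R)),
     (forall p, p \in s -> K p.1) /\
     f = (fun x => \sum_(p <- s) p.2 * p.1 x)].

Definition polar (C : set (T -> R)) : set (T -> R) :=
  [set g | L0 g /\ forall f, C f ->
     (\int[mu]_x (`|f x * g x|)%:E <= 1)%E].

Definition dual_space (K : set (T -> R)) : set (T -> R) := lspan (polar K).

Definition scale_set (l : R) (K : set (T -> R)) : set (T -> R) :=
  [set f | exists h, K h /\ f = (fun x => l * h x)].

Definition K_bounded (K B : set (T -> R)) : Prop :=
  exists l : R, 0 < l /\ B `<=` scale_set l K.

Definition is_topology_on (E : set (T -> R)) (tau : set (set (T -> R))) : Prop :=
  [/\ tau set0, tau E,
      (forall U, tau U -> U `<=` E),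
      (forall (I : Type) (U : I -> set (T -> R)),
          (forall i, tau (U i)) -> tau (\bigcup_i U i)) &
      (forall U V, tau U -> tau V -> tau (U `&` V))].

(* open sets are unions of a.e.-classes: tau is a topology on the quotient *)
Definition ae_saturated (E A : set (T -> R)) : Prop :=
  forall f h, A f -> E h -> ae_eqf f h -> A h.

Definition closed_in (E : set (T -> R)) (tau : set (set (T -> R))) C : Prop :=
  C `<=` E /\ tau (E `\` C).

Definition compact_in (tau : set (set (T -> R))) (K : set (T -> R)) : Prop :=
  forall (I : Type) (U : I -> set (T -> R)),
    (forall i, tau (U i)) -> K `<=` \bigcup_i U i ->
    exists s : seq I, K `<=` \bigcup_(i in [set i | List.In i s]) U i.

Definition weak_topology (E F : set (T -> R)) : set (set (T -> R)) :=
  [set V | V `<=` E /\ forall f, V f ->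
     exists (s : seq (T -> R)) (eps : R),
       (forall g, g \in s -> F g) /\ 0 < eps /\
       [set h | E h /\ forall g, g \in s -> `|pairing h g - pairing f g| < eps]
         `<=` V].

Definition same_trace (tau1 tau2 : set (set (T -> R))) (B : set (T -> R)) : Prop :=
  forall V, (exists U, tau1 U /\ V = U `&` B) <-> (exists U, tau2 U /\ V = U `&` B).

Definition solid (F : set (T -> R)) : Prop :=
  forall g h, F g -> L0 h -> {ae mu, forall x, `|h x| <= `|g x|} -> F h.

Definition separates_points (E F : set (T -> R)) : Prop :=
  forall f1 f2, E f1 -> E f2 -> ~ ae_eqf f1 f2 ->
    exists g, F g /\ pairing f1 g != pairing f2 g.

Definition has_strictly_positive (F : set (T -> R)) : Prop :=
  exists g, F g /\ {ae mu, forall x, 0 < g x}.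

Definition equicontinuous_Koethe_topology (K : set (T -> R))
    (tau : set (set (T -> R))) (F : set (T -> R)) : Prop :=
  [/\ compact_in tau K,
      [/\ F `<=` dual_space K, solid F, separates_points (lspan K) F &
        has_strictly_positive F] &
      forall B, B `<=` lspan K -> K_bounded K B ->
        same_trace tau (weak_topology (lspan K) F) B].

Definition Krein_Smulian (K : set (T -> R)) (tau : set (set (T -> R))) : Prop :=
  forall C, C `<=` lspan K -> ae_saturated (lspan K) C -> convex_set C ->
    (closed_in (lspan K) tau C <->
     forall l : R, 0 < l -> closed_in (lspan K) tau (C `&` scale_set l K)).

Definition continuous_on (E : set (T -> R)) (tau : set (set (T -> R)))
    (phi : (T -> R) -> R) : Prop :=
  forall V : set R, open V -> tau [set f | E f /\ V (phi f)].

End Koethe.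

(* Main.v *)
Require Import Defs.
From HB Require Import structures.
From mathcomp Require Import all_boot all_order all_algebra.
From mathcomp Require Import all_classical all_reals all_analysis.
From mathcomp Require Import ring lra.
Import Order.TTheory GRing.Theory Num.Theory.
Import numFieldNormedType.Exports.
Local Open Scope classical_set_scope.
Local Open Scope ring_scope.
Set Implicit Arguments. Unset Strict Implicit. Unset Printing Implicit Defensive.
Section Aux.
Context {d : measure_display} {T : measurableType d} {R : realType}.
Variable mu : probability T R.

Lemma lspan_L0 (S : set (T -> R)) : S `<=` L0 -> lspan S `<=` L0.
Proof.
move=> SL f [s [Hs ->]]; rewrite /L0 /=.
elim: s Hs => [|[k a] s IH] Hs.
  under eq_fun do rewrite big_nil. exact: measurable_cst.
under eq_fun do rewrite big_cons.
apply: measurable_realfun.measurable_funD; last by apply: IH => p ps; apply: Hs; rewrite inE ps orbT.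
apply: measurable_realfun.measurable_funM; first exact: measurable_cst.
by apply: SL; apply: (Hs (k, a)); rewrite inE eqxx.
Qed.

Lemma lspan_sub (S : set (T -> R)) k : S k -> lspan S k.
Proof.
move=> Sk; exists [:: (k, 1)]; split.
  by move=> p; rewrite inE => /eqP ->.
by apply: funext => x; rewrite big_cons big_nil mul1r addr0.
Qed.

Lemma lspanZ (S : set (T -> R)) a f : lspan S f -> lspan S (fun x => a * f x).
Proof.
move=> [s [Hs ->]]; exists [seq (p.1, a * p.2) | p <- s]; split.
  by move=> p /mapP [q qs ->] /=; apply: Hs.
apply: funext => x; rewrite big_map mulr_sumr; apply: eq_bigr => p _ /=.
by rewrite mulrA.
Qed.

Lemma lspanD (S : set (T -> R)) f h : lspan S f -> lspan S h ->
  lspan S (fun x => f x + h x).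
Proof.
move=> [s [Hs ->]] [t [Ht ->]]; exists (s ++ t); split.
  by move=> p; rewrite mem_cat => /orP [/Hs|/Ht].
by apply: funext => x; rewrite big_cat.
Qed.

Definition intg (f : T -> R) := mu.-integrable setT (EFin \o f).

Lemma intg_lin a f h : intg f -> intg h -> intg (fun x => a * f x + h x).
Proof.
move=> If Ih.
have := integrableD measurableT (integrableZl measurableT a If) Ih.
by apply: eq_integrable.
Qed.

Lemma intg_span (S1 S2 : set (T -> R)) :
  (forall k p, S1 k -> S2 p -> intg (fun x => k x * p x)) ->
  forall f h, lspan S1 f -> lspan S2 h -> intg (fun x => f x * h x).
Proof.
move=> H f h [s [Hs ->]] [t [Ht ->]].
elim: s Hs => [|[k a] s IH] Hs.
  apply: (eq_integrable _ (cst 0%E)) => //; last exact: integrable0.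
  by move=> x _ /=; rewrite big_nil mul0r.
have IHs : intg (fun x => (\sum_(p <- s) p.2 * p.1 x) * \sum_(p <- t) p.2 * p.1 x).
  by apply: IH => p ps; apply: Hs; rewrite inE ps orbT.
have Sk : S1 k by apply: (Hs (k, a)); rewrite inE eqxx.
have Ik : intg (fun x => k x * \sum_(p <- t) p.2 * p.1 x).
  clear IH IHs; elim: t Ht => [|[q b] t IHt] Ht.
    apply: (eq_integrable _ (cst 0%E)) => //; last exact: integrable0.
    by move=> x _ /=; rewrite big_nil mulr0.
  have Sq : S2 q by apply: (Ht (q, b)); rewrite inE eqxx.
  have Ht' : forall p, p \in t -> S2 p.1 by move=> p pt; apply: Ht; rewrite inE pt orbT.
  have := intg_lin b (H _ _ Sk Sq) (IHt Ht').
  apply: eq_integrable => // x _ /=; rewrite big_cons /=.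
  congr (EFin _); ring.
have := intg_lin a Ik IHs; apply: eq_integrable => // x _ /=.
rewrite big_cons /=; congr (EFin _); ring.
Qed.

End Aux.
Section Aux2.
Context {d : measure_display} {T : measurableType d} {R : realType}.
Variable mu : probability T R.
Local Notation intg := (intg mu).

Lemma pairing_lin a f1 f2 g : intg (fun x => f1 x * g x) -> intg (fun x => f2 x * g x) ->
  pairing mu (fun x => a * f1 x + f2 x) g = a * pairing mu f1 g + pairing mu f2 g.
Proof.
move=> I1 I2; rewrite /pairing.
rewrite (@eq_Rintegral _ _ _ _ _ (fun x => a * (f1 x * g x) + f2 x * g x)); last first.
  by move=> x _; ring.
rewrite RintegralD //; last first.
  by apply: (eq_integrable _ _ _ _ (integrableZl measurableT a I1)).
by rewrite RintegralZl.
Qed.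

Lemma pairingZ a f g : intg (fun x => f x * g x) ->
  pairing mu (fun x => a * f x) g = a * pairing mu f g.
Proof.
move=> I1; rewrite /pairing -RintegralZl //.
by apply: eq_Rintegral => x _; rewrite mulrA.
Qed.

Lemma pairingN f g : intg (fun x => f x * g x) ->
  pairing mu f (fun x => - g x) = - pairing mu f g.
Proof.
move=> I1; rewrite -mulN1r -pairingZ // /pairing.
by apply: eq_Rintegral => x _; ring.
Qed.

Lemma pairing_ae f h g : L0 f -> L0 h -> L0 g -> ae_eqf mu f h ->
  pairing mu f g = pairing mu h g.
Proof.
move=> mf mh mg fh; rewrite /pairing /Rintegral; congr fine.
apply: ae_eq_integral => //.
- by apply/measurable_realfun.measurable_EFinP; apply: measurable_realfun.measurable_funM.
- by apply/measurable_realfun.measurable_EFinP; apply: measurable_realfun.measurable_funM.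
move: fh; apply: filterS => x /= -> _; by [].
Qed.

End Aux2.
Section Aux3.
Context {d : measure_display} {T : measurableType d} {R : realType}.
Variable mu : probability T R.
Variable K : set (T -> R).
Hypothesis acK : absolutely_convex K.

Lemma K_scale k a : K k -> `|a| <= 1 -> K (fun x => a * k x).
Proof.
move=> Kk a1; have := acK (a:=a) (b:=0) Kk Kk; rewrite normr0 addr0 => /(_ a1).
by have -> : (fun x => a * k x + 0 * k x) = (fun x => a * k x)
  by apply: funext => x; rewrite mul0r addr0.
Qed.

Lemma K_0 k : K k -> K (fun _ => 0).
Proof.
move=> Kk; have := K_scale Kk (a := 0); rewrite normr0 ler01 => /(_ isT).
by have -> : (fun x => 0 * k x) = (fun _ : T => (0:R)) by apply: funext => x; rewrite mul0r.
Qed.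

Lemma scale_mono (l m : R) f : 0 < l -> l <= m -> scale_set l K f -> scale_set m K f.
Proof.
move=> l0 lm [k [Kk ->]]; have m0 : 0 < m by apply: lt_le_trans lm.
exists (fun x => (l / m) * k x); split.
  apply: K_scale => //; rewrite ger0_norm; last by apply: divr_ge0; apply: ltW.
  by rewrite ler_pdivrMr // mul1r.
apply: funext => x; rewrite mulrA mulrCA divff ?mulr1 //; exact: lt0r_neq0.
Qed.

Lemma scale_span m f : scale_set m K f -> lspan K f.
Proof. by move=> [k [Kk ->]]; apply: lspanZ; apply: lspan_sub. Qed.

Lemma span_bounded k0 f : K k0 -> lspan K f -> exists m, 0 < m /\ scale_set m K f.
Proof.
move=> Kk0 [s [Hs ->]].
suff : scale_set (1 + \sum_(p <- s) `|p.2|) K (fun x => \sum_(p <- s) p.2 * p.1 x).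
  move=> H; eexists; split; last exact: H.
  by apply: (@lt_le_trans _ _ 1) => //; rewrite lerDl; apply: sumr_ge0 => p _.
elim: s Hs => [|[k a] s IH] Hs.
  exists (fun _ => 0); split; first exact: K_0 Kk0.
  by apply: funext => x; rewrite big_nil big_nil addr0 mulr0.
have Kk : K k by apply: (Hs (k, a)); rewrite inE eqxx.
have [h [Kh Eh]] : scale_set (1 + \sum_(p <- s) `|p.2|) K (fun x => \sum_(p <- s) p.2 * p.1 x).
  by apply: IH => p ps; apply: Hs; rewrite inE ps orbT.
set m := 1 + \sum_(p <- s) `|p.2|.
have m0 : 0 < m by apply: (@lt_le_trans _ _ 1) => //; rewrite lerDl; apply: sumr_ge0 => p _.
set m' := 1 + \sum_(p <- (k, a) :: s) `|p.2|.
have Em' : m' = `|a| + m by rewrite /m' /m big_cons /=; ring.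
have m'0 : 0 < m' by rewrite Em'; apply: (@lt_le_trans _ _ m) => //; rewrite lerDr.
exists (fun x => (a / m') * k x + (m / m') * h x); split.
  have mi : 0 < m'^-1 by rewrite invr_gt0.
  apply: acK => //; rewrite !normrM !(ger0_norm (ltW mi)).
  rewrite (ger0_norm (ltW m0)) -mulrDl -Em' divff //; exact: lt0r_neq0.
apply: funext => x; rewrite big_cons /=.
have -> : \sum_(p <- s) p.2 * p.1 x = m * h x by move/(congr1 (fun F => F x)): Eh.
by field; exact: lt0r_neq0.
Qed.

Hypothesis KL0 : K `<=` L0.
Hypothesis cK : closed_in_prob mu K.
Hypothesis complete : measure_is_complete mu.

Lemma scale_sat (l : R) k f : 0 < l -> K k -> L0 f ->
  ae_eqf mu (fun x => l * k x) f -> scale_set l K f.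
Proof.
move=> l0 Kk mf [N [mN N0 HN]].
have Kf : K (fun x => l^-1 * f x).
  apply: (cK (u := fun _ => k)) => //.
    by apply: measurable_realfun.measurable_funM => //; exact: measurable_cst.
  move=> eps eps0.
  have -> : (fun n : nat => mu [set x | eps <= `|k x - l^-1 * f x|]) = (fun _ => 0%E).
    apply: funext => n.
    have sub : [set x | eps <= `|k x - l^-1 * f x|] `<=` N.
      move=> x /= ex; apply: HN => /= E; move: ex.
      by rewrite -E mulrA mulVf ?mul1r ?subrr ?normr0 ?leNgt ?eps0 //; exact: lt0r_neq0.
    have mS : measurable [set x | eps <= `|k x - l^-1 * f x|].
      by apply: complete; exists N; split.
    apply/eqP; rewrite eq_le measure_ge0 andbT -N0.
    by apply: le_measure => //; rewrite inE.
  exact: cvg_cst.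
exists (fun x => l^-1 * f x); split => //.
by apply: funext => x; rewrite mulrA divff ?mul1r //; exact: lt0r_neq0.
Qed.

End Aux3.
Section Aux4.
Context {d : measure_display} {T : measurableType d} {R : realType}.
Variable mu : probability T R.
Variables E F : set (T -> R).

Lemma weak_E : weak_topology mu E F E.
Proof.
split => // f Ef; exists [::], 1; split => //; split => // h [] //.
Qed.

Lemma weak_I V1 V2 : weak_topology mu E F V1 -> weak_topology mu E F V2 ->
  weak_topology mu E F (V1 `&` V2).
Proof.
move=> [V1E H1] [V2E H2]; split; first by move=> f [/V1E].
move=> f [/H1 [s1 [e1 [F1 [e10 S1]]]] /H2 [s2 [e2 [F2 [e20 S2]]]]].
exists (s1 ++ s2), (Order.min e1 e2); split.
  by move=> g; rewrite mem_cat => /orP [/F1|/F2].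
split; first by rewrite lt_min e10 e20.
move=> h [Eh Hh]; split.
  apply: S1; split => // g gs; apply: (lt_le_trans (Hh g _)); last by rewrite ge_min lexx.
  by rewrite mem_cat gs.
apply: S2; split => // g gs; apply: (lt_le_trans (Hh g _)); last by rewrite ge_min lexx orbT.
by rewrite mem_cat gs orbT.
Qed.

Lemma weak_pred g (P : R -> Prop) : F g ->
  (forall y, P y -> exists e, 0 < e /\ forall z, `|z - y| < e -> P z) ->
  weak_topology mu E F [set h | E h /\ P (pairing mu h g)].
Proof.
move=> Fg HP; split; first by move=> f [].
move=> f [Ef /HP [e [e0 He]]]; exists [:: g], e; split.
  by move=> g'; rewrite inE => /eqP ->.
split => // h [Eh Hh]; split => //; apply: He; apply: Hh; by rewrite inE.
Qed.

Lemma weak_bigI (I : Type) (Q : I -> (T -> R) -> Prop) (s : seq I) :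
  (forall i, weak_topology mu E F [set h | E h /\ Q i h]) ->
  weak_topology mu E F [set h | E h /\ forall i, List.In i s -> Q i h].
Proof.
move=> HQ; elim: s => [|i s IH].
  have -> : [set h | E h /\ forall i, List.In i [::] -> Q i h] = E.
    by apply/seteqP; split => h; [case|split].
  exact: weak_E.
have -> : [set h | E h /\ forall j, List.In j (i :: s) -> Q j h] =
   [set h | E h /\ Q i h] `&` [set h | E h /\ forall i, List.In i s -> Q i h].
  apply/seteqP; split => h /=.
    by move=> [Eh H]; split; split => //; [apply: H; left|move=> j js; apply: H; right].
  by move=> [[Eh Hi] [_ H]]; split => // j [<-|/H].
exact: weak_I.
Qed.

Lemma tau_local (tau : set (set (T -> R))) (A : set (T -> R)) :
  is_topology_on E tau ->
  (forall f, A f -> exists U, tau U /\ U f /\ U `<=` A) -> tau A.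
Proof.
move=> [_ _ _ Hu _] H.
have -> : A = \bigcup_(i : {f | A f}) (projT1 (cid (H _ (projT2 i)))).
  apply/seteqP; split => f.
    move=> Af; exists (exist _ f Af) => //=.
    by case: (cid _) => U /= [_ []].
  move=> [[g Ag] _] /=; case: (cid _) => U /= [_ [_ UA]]; exact: UA.
apply: Hu => i; by case: (cid _) => U /= [].
Qed.

End Aux4.
Lemma real_sep (R : realType) (x a b : R) :
  `|x - a| < `|a - b| / 2 -> `|x - b| < `|a - b| / 2 -> False.
Proof.
move=> h1 h2; have := ler_distD x a b; rewrite (distrC a x).
move=> h3; have : `|a - b| < `|a - b| / 2 + `|a - b| / 2 by apply: (le_lt_trans h3); apply: ltrD.
by rewrite -splitr ltxx.
Qed.

Lemma real_open1 (R : realType) (c : R) y : c < y ->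
  exists e, 0 < e /\ forall z, `|z - y| < e -> c < z.
Proof.
move=> cy; exists (y - c); split; first by rewrite subr_gt0.
move=> z; rewrite ltr_norml => /andP [h _]; lra.
Qed.

Lemma real_open2 (R : realType) (l c del : R) y : 0 < l -> `|l * y - c| < del ->
  exists e, 0 < e /\ forall z, `|z - y| < e -> `|l * z - c| < del.
Proof.
move=> l0 h; exists ((del - `|l * y - c|) / l); split.
  by apply: divr_gt0 => //; rewrite subr_gt0.
move=> z hz; have : `|l * z - c| <= `|l * z - l * y| + `|l * y - c| by apply: ler_distD.
rewrite -mulrBr normrM (gtr0_norm l0).
have : l * `|z - y| < del - `|l * y - c| by rewrite mulrC -ltr_pdivlMr.
move=> h1 h2; apply: (le_lt_trans h2); lra.
Qed.

Section Main.
Context {d : measure_display} {T : measurableType d} {R : realType}.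
Variable mu : probability T R.
Variables (K : set (T -> R)) (tau : set (set (T -> R))) (F : set (T -> R)).
Hypothesis complete : measure_is_complete mu.
Hypothesis KL0 : K `<=` L0.
Hypothesis acK : absolutely_convex K.
Hypothesis cK : closed_in_prob mu K.
Hypothesis topo : is_topology_on (lspan K) tau.
Hypothesis eqK : equicontinuous_Koethe_topology mu K tau F.
Hypothesis KS : Krein_Smulian mu K tau.

Local Notation E := (lspan K).
Local Notation p := (pairing mu).

Lemma EL0 : E `<=` L0. Proof. exact: lspan_L0. Qed.

Lemma Fdual : F `<=` dual_space mu K. Proof. by case: eqK => _ []. Qed.

Lemma FL0 : F `<=` L0.
Proof. move=> g /Fdual; apply: lspan_L0 => q []. by []. Qed.

Lemma intgEF f g : E f -> F g -> intg mu (fun x => f x * g x).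
Proof.
move=> Ef /Fdual Fg; apply: (intg_span _ Ef Fg) => k q Kk [Lq Hq].
apply/integrableP; split.
  by apply/measurable_realfun.measurable_EFinP; apply: measurable_realfun.measurable_funM => //; apply: KL0.
apply: (@le_lt_trans _ _ 1%E); last exact: ltry.
apply: (le_trans _ (Hq _ Kk)); rewrite le_eqVlt; apply/orP; left; apply/eqP.
by apply: eq_integral => x _ /=.
Qed.

Lemma tau_sub U : tau U -> U `<=` E.
Proof. by case: topo => _ _ H _ _; apply: H. Qed.

Lemma sep_lemma l f : 0 < l -> E f -> ~ scale_set l K f ->
  exists W, weak_topology mu E F W /\ W f /\ forall h, W h -> scale_set l K h -> False.
Proof.
move=> l0 Ef nf.
have Hsep : forall i : {k | scale_set l K k}, exists g, F g /\ p (sval i) g != p f g.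
  move=> [k kl] /=; case: (kl) => k' [Kk' Ek].
  case: eqK => _ [_ _ sepF _] _; apply: sepF => //.
    by rewrite Ek; apply: lspanZ; apply: lspan_sub.
  move=> ae; apply: nf; rewrite Ek in ae.
  exact: (scale_sat cK complete l0 Kk' (EL0 Ef) ae).
pose gk i := projT1 (cid (Hsep i)).
have Fgk i : F (gk i) by rewrite /gk; case: (cid _) => g /= [].
have Ngk i : p (sval i) (gk i) != p f (gk i) by rewrite /gk; case: (cid _) => g /= [].
pose del i := `|p (sval i) (gk i) - p f (gk i)| / 2.
have del0 i : 0 < del i by apply: divr_gt0 => //; rewrite normr_gt0 subr_eq0.
pose O i := [set h | E h /\ `|l * p h (gk i) - p (sval i) (gk i)| < del i].
have wO i : weak_topology mu E F (O i).
  apply: (weak_pred mu E (P := fun y => `|l * y - p (sval i) (gk i)| < del i)) => // y.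
  exact: real_open2.
case: eqK => cpt _ trace.
have KE : K `<=` E by move=> k; apply: lspan_sub.
have KB : K_bounded K K.
  exists 1; split => // k Kk; exists k; split => //; apply: funext => x; by rewrite mul1r.
have HU i : exists U, tau U /\ O i `&` K = U `&` K.
  by apply/(trace K KE KB); exists (O i).
pose U i := projT1 (cid (HU i)).
have tU i : tau (U i) by rewrite /U; case: (cid _) => V /= [].
have EU i : O i `&` K = U i `&` K by rewrite /U; case: (cid _) => V /= [].
have cover : K `<=` \bigcup_i U i.
  move=> k Kk.
  have lK : scale_set l K (fun x => l * k x) by exists k.
  exists (exist _ _ lK) => //.
  have : (U (exist _ _ lK) `&` K) k; last by case.
  rewrite -EU; split => //; split; first exact: KE.
  by rewrite /= pairingZ ?subrr ?normr0 //; apply: intgEF => //; apply: KE.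
have [s Hs] := cpt _ U tU cover.
exists [set h | E h /\ forall i, List.In i s -> `|p h (gk i) - p f (gk i)| < del i].
split.
  apply: weak_bigI => i.
  apply: (weak_pred mu E (P := fun y => `|y - p f (gk i)| < del i)) => // y hy.
  exists (del i - `|y - p f (gk i)|); split; first by rewrite subr_gt0.
  move=> z hz; have := ler_distD y z (p f (gk i)); lra.
split; first by split => // i _; rewrite subrr normr0.
move=> h [Eh Hh] [k' [Kk' Eh']].
have [i si Uk'] := Hs _ Kk'.
have : (O i `&` K) k' by rewrite EU.
move=> [[Ek' Hk'] _].
have := Hh i si; rewrite Eh' pairingZ; last exact: intgEF.
move=> H2; apply: (real_sep Hk') ; exact: H2.
Qed.


Lemma half_open g c : F g -> tau [set h | E h /\ c < p h g].
Proof.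
move=> Fg.
set C := [set h | E h /\ p h g <= c].
have CE : C `<=` E by move=> h [].
have Csat : ae_saturated mu E C.
  move=> f h [Ef Hf] Eh ae; split => //.
  by rewrite -(pairing_ae (EL0 Ef) (EL0 Eh) (FL0 Fg) ae).
have Cconv : Defs.convex_set C.
  move=> f h t [Ef Hf] [Eh Hh] /andP [t0 t1]; split.
    by apply: lspanD; apply: lspanZ.
  rewrite pairing_lin; last 2 first.
  - by apply: intgEF => //; apply: lspanZ.
  - by apply: intgEF => //; apply: lspanZ.
  rewrite !pairingZ; try exact: intgEF.
  have : t * p f g <= t * c by rewrite ler_wpM2l.
  have : (1 - t) * p h g <= (1 - t) * c by rewrite ler_wpM2l // subr_ge0.
  move=> h1 h2; have := lerD h2 h1; rewrite -mulrDl subrKC mul1r. by [].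
have Ccl : closed_in E tau C.
  apply/(KS CE Csat Cconv) => l l0; split; first by move=> h [/CE].
  apply: (tau_local topo) => f [Ef nCf].
  case: (pselect (exists k0, K k0)) => [[k0 Kk0]|nK]; last first.
    exists E; split; first by case: topo.
    split => // h Eh; split => // -[_ [k [Kk _]]]; apply: nK; by exists k.
  have [m0 [m00 fm0]] := span_bounded acK Kk0 Ef.
  set m := m0 + l.
  have m0m : m0 <= m by rewrite lerDl ltW.
  have lm : l <= m by rewrite lerDr ltW.
  have m0' : 0 < m by apply: addr_gt0.
  set B := scale_set m K.
  have fB : B f by apply: (scale_mono acK m00 m0m).
  have lKB : scale_set l K `<=` B by move=> h; apply: (scale_mono acK l0 lm).
  have BE : B `<=` E by move=> h; apply: scale_span.
  have KB : K_bounded K B by exists m; split.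
  have [W [wW [Wf HW]]] : exists W, weak_topology mu E F W /\ W f /\
      forall h, W h -> C h -> scale_set l K h -> False.
    case: (ltP c (p f g)) => hc.
      exists [set h | E h /\ c < p h g]; split.
        apply: (weak_pred mu E (P := fun y => c < y)) => // y; exact: real_open1.
      split => // h [_ h1] [_ h2] _; lra.
    have [W [wW [Wf HW]]] := sep_lemma l0 Ef (fun lf => nCf (conj (conj Ef hc) lf)).
    by exists W; split => //; split => // h Wh _; apply: HW.
  case: eqK => _ _ trace.
  have [U [tU EU]] : exists U, tau U /\ W `&` B = U `&` B.
    by apply/(trace B BE KB); exists W.
  exists U; split => //; split.
    have : (U `&` B) f by rewrite -EU.
    by case.
  move=> h Uh; split; first exact: tau_sub tU _ Uh.
  move=> [Ch lKh]; have : (W `&` B) h by rewrite EU; split => //; apply: lKB.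
  by move=> [Wh _]; apply: HW Wh Ch lKh.
case: Ccl => _ tC.
have -> : [set h | E h /\ c < p h g] = E `\` C.
  apply/seteqP; split => h /=.
    by move=> [Eh hc]; split => // -[_]; rewrite leNgt hc.
  by move=> [Eh nC]; split => //; rewrite ltNge; apply/negP => hc; apply: nC.
exact: tC.
Qed.

End Main.

Unset Implicit Arguments.

Theorem lemma5p1 (d : measure_display) (T : measurableType d) (R : realType)
  (mu : probability T R) (K : set (T -> R))
  (tau : set (set (T -> R))) (F : set (T -> R)) :
  measure_is_complete mu ->
  K `<=` L0 ->
  absolutely_convex K ->
  closed_in_prob mu K ->
  bounded_in_prob mu K ->
  is_topology_on (lspan K) tau ->
  (forall U, tau U -> ae_saturated mu (lspan K) U) ->
  equicontinuous_Koethe_topology mu K tau F ->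
  Krein_Smulian mu K tau ->
  forall g, F g -> continuous_on (lspan K) tau (fun f => pairing mu f g).
Proof.
move=> complete KL0 acK cK _ topo _ eqK KS g Fg V oV.
have Fng : F (fun x => - g x).
  case: (eqK) => _ [_ solidF _ _] _; apply: (solidF g) => //.
    have -> : (fun x => - g x) = (fun x => -1 * g x) by apply: funext => x; rewrite mulN1r.
    apply: measurable_realfun.measurable_funM; first exact: measurable_cst.
    exact: (FL0 eqK).
  by apply: aeW => x; rewrite normrN.
apply: (tau_local topo) => f [Ef Vf].
have : nbhs (pairing mu f g) V by apply: open_nbhs_nbhs; split.
case/nbhs_ballP => e e0 He.
exists ([set h | lspan K h /\ pairing mu f g - e < pairing mu h g] `&`
        [set h | lspan K h /\ - (pairing mu f g + e) < pairing mu h (fun x => - g x)]).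
split.
  case: (topo) => _ _ _ _ HI; apply: HI.
    exact: (half_open complete KL0 acK cK topo eqK KS).
  exact: (half_open complete KL0 acK cK topo eqK KS).
split.
  split; split => //; first by rewrite ltrBlDr ltrDl.
  rewrite pairingN; last exact: (intgEF KL0 eqK).
  by rewrite ltrN2 ltrDl.
move=> h [[Eh h1] [_ h2]]; split => //; apply: He.
rewrite pairingN in h2; last exact: (intgEF KL0 eqK).
rewrite -ball_normE /ball_ /=; rewrite ltr_norml; apply/andP; split; lra.
Qed.
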